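(* Let $R$ be a ring, $N\geqslant0$, $M$ an $N$-nilpotent $R$-bimodule, $F=M\otimes_R-$, and $X,Y,Z$ left $R$-modules. Let $\mathrm{Ind}(X)\stackrel{\alpha}\to\mathrm{Ind}(Y)\stackrel{\beta}\to\mathrm{Ind}(Z)$ be an exact sequence of $T_R(M)$-modules with $\alpha,\beta$ of the form $(\ast)$, determined by $\alpha_i\in\operatorname{Hom}_R(X,F^{i-1}(Y))$ and $\beta_i\in\operatorname{Hom}_R(Y,F^{i-1}(Z))$. Let $W$ be an $R$-module. Then the sequence $\operatorname{Hom}_{T_R(M)}(\mathrm{Ind}(Z),\mathrm{Ind}(W))\to\operatorname{Hom}_{T_R(M)}(\mathrm{Ind}(Y),\mathrm{Ind}(W))\to\operatorname{Hom}_{T_R(M)}(\mathrm{Ind}(X),\mathrm{Ind}(W))$ (induced by $\beta$ and $\alpha$) is exact if and only if: (C3) for any $f_i\in\operatorname{Hom}_R(Y,F^{i-1}(W))$, $1\leqslant i\leqslant N+1$, with $\sum_{i=1}^{j}F^{i-1}(f_{j-i+1})\circ\alpha_i=0$ for $j=1,\dots,N+1$, there exist $g_i\in\operatorname{Hom}_R(Z,F^{i-1}(W))$, $1\leqslant i\leqslant N+1$, such that $f_j=\sum_{i=1}^{j}F^{i-1}(g_{j-i+1})\circ\beta_i$ for each $1\leqslant j\leqslant N+1$.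
   Context: All rings are associative with identity; modules are left modules. For an $R$-bimodule $M$ set $M^{\otimes_R0}=R$ and $M^{\otimes_R(i+1)}=M\otimes_R M^{\otimes_Ri}$; $M$ is $N$-nilpotent if $M^{\otimes_R(N+1)}=0$. The tensor ring is $T_R(M)=\bigoplus_{i=0}^N M^{\otimes_Ri}$. Write $F=M\otimes_R-$. A $T_R(M)$-module is identified with a pair $(X,u)$, $X$ an $R$-module, $u\in\operatorname{Hom}_R(F(X),X)$; morphisms $(X,u)\to(X',u')$ are $R$-maps $f$ with $f\circ u=u'\circ F(f)$; exactness is checked on underlying $R$-modules. For an $R$-module $X$, $\mathrm{Ind}(X)=(\bigoplus_{i=1}^{N+1}F^{i-1}(X),c_X)$ with $c_X$ the inclusion of $F(\bigoplus_{i=1}^{N+1}F^{i-1}(X))\cong\bigoplus_{i=2}^{N+1}F^{i-1}(X)$ into $\bigoplus_{i=1}^{N+1}F^{i-1}(X)$. A morphism $\alpha:\mathrm{Ind}(X)\to\mathrm{Ind}(Y)$ ''of the form $(\ast)$'' determined by $\alpha_i\in\operatorname{Hom}_R(X,F^{i-1}(Y))$ is the lower triangular matrix with $(j,i)$ entry $F^{i-1}(\alpha_{j-i+1})$ for $i\le j$ and $0$ otherwise, i.e. $\alpha(x_1,\dots,x_{N+1})_j=\sum_{i=1}^jF^{i-1}(\alpha_{j-i+1})(x_i)$; every $T_R(M)$-morphism $\mathrm{Ind}(X)\to\mathrm{Ind}(Y)$ has this form. *)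

(* Defs.v *)
From HB Require Import structures.
From mathcomp Require Import all_boot all_order all_algebra.
From mathcomp Require Import boolp.
Set Implicit Arguments. Unset Strict Implicit. Unset Printing Implicit Defensive.
Import GRing.Theory.
Local Open Scope ring_scope.

Record bimodule_on (R : pzRingType) (M : lmodType R) := BimoduleOn {
  rmul : M -> R -> M;
  rmulA : forall m r s, rmul (rmul m r) s = rmul m (r * s);
  rmul1 : forall m, rmul m 1 = m;
  rmulDl : forall m m' r, rmul (m + m') r = rmul m r + rmul m' r;
  rmulDr : forall m r s, rmul m (r + s) = rmul m r + rmul m s;
  rmulZ : forall a m r, rmul (a *: m) r = a *: rmul m r
}.

Record tensor_functor (R : pzRingType) (M : lmodType R) (B : bimodule_on M) :=
 TensorFunctor {
  tF : lmodType R -> lmodType R;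
  tens : forall X : lmodType R, M -> X -> tF X;
  tensDl : forall (X : lmodType R) m m' (x : X), tens (m + m') x = tens m x + tens m' x;
  tensDr : forall (X : lmodType R) m (x x' : X), tens m (x + x') = tens m x + tens m x';
  tens_bal : forall (X : lmodType R) m r (x : X), tens (rmul B m r) x = tens m (r *: x);
  tensZ : forall (X : lmodType R) a m (x : X), a *: tens m x = tens (a *: m) x;
  tens_univ : forall (X : lmodType R) (A : zmodType) (phi : M -> X -> A),
     (forall m m' x, phi (m + m') x = phi m x + phi m' x) ->
     (forall m x x', phi m (x + x') = phi m x + phi m x') ->
     (forall m r x, phi (rmul B m r) x = phi m (r *: x)) ->
     exists h : {additive tF X -> A},
       (forall m x, h (tens m x) = phi m x) /\
       (forall h' : {additive tF X -> A},
           (forall m x, h' (tens m x) = phi m x) -> h' =1 h);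
  tFmap : forall X Y : lmodType R, {linear X -> Y} -> {linear tF X -> tF Y};
  tFmapE : forall (X Y : lmodType R) (f : {linear X -> Y}) m x,
     tFmap f (tens m x) = tens m (f x)
}.

Section Tensor.
Variables (R : pzRingType) (M : lmodType R) (B : bimodule_on M).
Variable T : tensor_functor B.

Fixpoint Fpow (n : nat) (X : lmodType R) : lmodType R :=
  match n with 0 => X | n'.+1 => tF T (Fpow n' X) end.

Fixpoint Fmapn (n : nat) (X Y : lmodType R) (f : {linear X -> Y}) :
    {linear Fpow n X -> Fpow n Y} :=
  match n return {linear Fpow n X -> Fpow n Y} with
  | 0 => f
  | n'.+1 => tFmap T (Fmapn n' f)
  end.

Lemma FpowD (a b : nat) (Y : lmodType R) : Fpow a (Fpow b Y) = Fpow (a + b) Y.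
Proof. by elim: a => [|a IH] //=; rewrite IH. Qed.

Definition Fcast (a b c : nat) (Y : lmodType R) (e : (a + b)%N = c)
    (x : Fpow a (Fpow b Y)) : Fpow c Y :=
  eq_rect _ (fun U : lmodType R => (U : Type)) x _
    (etrans (FpowD a b Y) (f_equal (fun n => Fpow n Y) e)).

(* N-nilpotency: M^{(x)(N+1)} = 0, where M^{(x)0} = R (regular left module)
   and M^{(x)(i+1)} = M (x)_R M^{(x)i} = F (M^{(x)i}). *)
Definition tpow (i : nat) : lmodType R := Fpow i (R^o : lmodType R).
Definition nilpotent_bimod (N : nat) : Prop := forall m : tpow N.+1, m = 0.

Variable N : nat.

(* index helpers for the matrices of the form (star): for j : 'I_(N+1) and
   i <= j, the indices i and j - i (0-based). *)
Definition wid (j : 'I_N.+1) (i : 'I_j.+1) : 'I_N.+1 := widen_ord (ltn_ord j) i.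
Definition sbo (j : 'I_N.+1) (i : 'I_j.+1) : 'I_N.+1 :=
  Ordinal (leq_ltn_trans (leq_subr i j) (ltn_ord j)).
Lemma wid_sbo (j : 'I_N.+1) (i : 'I_j.+1) : (wid i + sbo i)%N = j.
Proof. by rewrite /= subnKC //; have := ltn_ord i; rewrite ltnS. Qed.

(* The underlying R-module of Ind(X): (+)_{i=1}^{N+1} F^{i-1}(X),
   0-based: components indexed by i : 'I_(N+1), the i-th lying in F^i X. *)
Definition dsum (X : lmodType R) : Type := forall i : 'I_N.+1, Fpow i X.

Section DSum.
Variable X : lmodType R.
HB.instance Definition _ := Choice.on (dsum X).
Definition dsum_zero : dsum X := fun i => 0.
Definition dsum_add (u v : dsum X) : dsum X := fun i => u i + v i.
Definition dsum_opp (u : dsum X) : dsum X := fun i => - u i.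
Definition dsum_scale (a : R) (u : dsum X) : dsum X := fun i => a *: u i.
Lemma dsum_addA : associative dsum_add.
Proof. by move=> u v w; apply: functional_extensionality_dep => i; rewrite /dsum_add addrA. Qed.
Lemma dsum_addC : commutative dsum_add.
Proof. by move=> u v; apply: functional_extensionality_dep => i; rewrite /dsum_add addrC. Qed.
Lemma dsum_add0 : left_id dsum_zero dsum_add.
Proof. by move=> u; apply: functional_extensionality_dep => i; rewrite /dsum_add add0r. Qed.
Lemma dsum_addN : left_inverse dsum_zero dsum_opp dsum_add.
Proof. by move=> u; apply: functional_extensionality_dep => i; rewrite /dsum_add addNr. Qed.
HB.instance Definition _ := GRing.isZmodule.Build (dsum X)
  dsum_addA dsum_addC dsum_add0 dsum_addN.
Lemma dsum_scaleA a b (u : dsum X) :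
  dsum_scale a (dsum_scale b u) = dsum_scale (a * b) u.
Proof. by apply: functional_extensionality_dep => i; rewrite /dsum_scale scalerA. Qed.
Lemma dsum_scale1 : left_id 1 dsum_scale.
Proof. by move=> u; apply: functional_extensionality_dep => i; rewrite /dsum_scale scale1r. Qed.
Lemma dsum_scaleDr : right_distributive dsum_scale +%R.
Proof. by move=> a u v; apply: functional_extensionality_dep => i; rewrite /dsum_scale scalerDr. Qed.
Lemma dsum_scaleDl (u : dsum X) : {morph dsum_scale^~ u : a b / a + b}.
Proof. by move=> a b; apply: functional_extensionality_dep => i; rewrite /dsum_scale scalerDl. Qed.
HB.instance Definition _ := GRing.Zmodule_isLmodule.Build R (dsum X)
  dsum_scaleA dsum_scale1 dsum_scaleDr dsum_scaleDl.

Definition dproj (k : 'I_N.+1) (u : dsum X) : Fpow k X := u k.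
Lemma dproj_linear k : linear (dproj k).
Proof. by []. Qed.
HB.instance Definition _ (k : 'I_N.+1) := GRing.isLinear.Build R (dsum X) (Fpow k X) _
  (dproj k) (dproj_linear k).

(* The structure map c_X of Ind(X): F((+)_{i<=N} F^i X) = (+)_{1<=i<=N+1} F^i X
   (the summand F^{N+1} X vanishing) followed by the inclusion into
   (+)_{i<=N} F^i X; component 0 is 0 and component k+1 is F(proj_k). *)
Definition cInd (z : tF T (dsum X)) : dsum X :=
  fun j => (match nat_of_ord j as n return (n < N.+1)%N -> Fpow n X with
            | 0 => fun _ => 0
            | k.+1 => fun h => tFmap T (dproj (Ordinal (ltnW h))) z
            end) (ltn_ord j).
End DSum.

Definition Tmor (X X' : lmodType R) (u : tF T X -> X) (u' : tF T X' -> X')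
    (f : {linear X -> X'}) : Prop :=
  forall z, f (u z) = u' (tFmap T f z).

Definition IndMor (X Y : lmodType R) (f : {linear dsum X -> dsum Y}) : Prop :=
  Tmor (@cInd X) (@cInd Y) f.

(* The morphism Ind(X) -> Ind(Y) of the form (star) determined by
   a_k : X -> F^k Y (k = 0..N, i.e. alpha_{k+1} in the paper):
   (a x)_j = sum_{i<=j} F^i(a_{j-i})(x_i). *)
Definition starmap (X Y : lmodType R) (a : forall k : 'I_N.+1, {linear X -> Fpow k Y})
    (x : dsum X) : dsum Y :=
  fun j => \sum_(i < j.+1)
     Fcast (wid_sbo i) (Fmapn (wid i) (a (sbo i)) (x (wid i))).

Definition conv (X Y W : lmodType R)
    (f : forall k : 'I_N.+1, {linear Y -> Fpow k W})
    (a : forall k : 'I_N.+1, {linear X -> Fpow k Y}) (j : 'I_N.+1) (x : X) :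
    Fpow j W :=
  \sum_(i < j.+1) Fcast (wid_sbo i) (Fmapn (wid i) (f (sbo i)) (a (wid i) x)).
End Tensor.

(* Main.v *)
Require Import Defs.
From HB Require Import structures.
From mathcomp Require Import all_boot all_order all_algebra.
From mathcomp Require Import boolp.
Set Implicit Arguments. Unset Strict Implicit. Unset Printing Implicit Defensive.
Import GRing.Theory.
Local Open Scope ring_scope.

Definition addw (U V : zmodType) (h : U -> V) (hD : forall x y, h (x + y) = h x + h y) : U -> V := h.
Lemma addw_nmod (U V : zmodType) (h : U -> V) hD : nmod_morphism (@addw U V h hD).
Proof.
have h0 : h 0 = 0 by apply: (@addIr _ (h 0)); rewrite -hD !add0r.
by split => //; move=> x y; exact: hD.
Qed.
HB.instance Definition _ (U V : zmodType) (h : U -> V) hD :=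
  GRing.isNmodMorphism.Build U V (@addw U V h hD) (@addw_nmod U V h hD).

Section TF.
Variables (R : pzRingType) (M : lmodType R) (B : bimodule_on M).
Variable T : tensor_functor B.

Lemma tF_uniq (U : lmodType R) (A : zmodType) (h1 h2 : tF T U -> A) :
  (forall x y, h1 (x + y) = h1 x + h1 y) ->
  (forall x y, h2 (x + y) = h2 x + h2 y) ->
  (forall m x, h1 (tens T m x) = h2 (tens T m x)) -> forall z, h1 z = h2 z.
Proof.
move=> D1 D2 E.
have [||| h [_ Hu]] := @tens_univ _ _ _ T U A (fun m x => h2 (tens T m x)).
- by move=> m m' x; rewrite tensDl D2.
- by move=> m x x'; rewrite tensDr D2.
- by move=> m r x; rewrite tens_bal.
move=> z.
have e1 := Hu (@addw _ _ h1 D1 : {additive _ -> _}) E.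
have e2 := Hu (@addw _ _ h2 D2 : {additive _ -> _}) (fun _ _ => erefl).
by have := e1 z; have := e2 z; rewrite /= /addw => -> ->.
Qed.

Lemma tFmap_ext (U V : lmodType R) (f g : {linear U -> V}) :
  f =1 g -> forall z, tFmap T f z = tFmap T g z.
Proof.
move=> fg; apply: tF_uniq; try by move=> x y; rewrite raddfD.
by move=> m x; rewrite !tFmapE fg.
Qed.

Lemma tens0 (U : lmodType R) m : tens T m (0 : U) = 0.
Proof. by apply: (@addrI _ (tens T m (0 : U))); rewrite -tensDr !addr0. Qed.

Lemma tens_sum (U : lmodType R) m (I : Type) (r : seq I) (P : pred I) (F : I -> U) :
  tens T m (\sum_(i <- r | P i) F i) = \sum_(i <- r | P i) tens T m (F i).
Proof.
elim/big_rec2: _ => [|i x y _ <-]; first exact: tens0.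
by rewrite tensDr.
Qed.

Lemma tFmap_zero (U V : lmodType R) (f : {linear U -> V}) :
  (forall x, f x = 0) -> forall z, tFmap T f z = 0.
Proof.
move=> f0; apply: (@tF_uniq _ _ _ (fun _ => 0)); try by move=> x y; rewrite ?raddfD ?addr0.
by move=> m x; rewrite !tFmapE f0 tens0.
Qed.

Lemma tFmap_id (U : lmodType R) (f : {linear U -> U}) :
  (forall x, f x = x) -> forall z, tFmap T f z = z.
Proof.
move=> f0; apply: (@tF_uniq _ _ _ id); try by move=> x y; rewrite ?raddfD.
by move=> m x; rewrite !tFmapE f0.
Qed.

Lemma tFmap_comp (U V W : lmodType R) (f : {linear U -> V}) (g : {linear V -> W})
  (h : {linear U -> W}) :
  (forall x, g (f x) = h x) -> forall z, tFmap T g (tFmap T f z) = tFmap T h z.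
Proof.
move=> E; apply: tF_uniq; try by move=> x y; rewrite ?raddfD.
by move=> m x; rewrite !tFmapE E.
Qed.

Definition tcast (U V : lmodType R) (p : U = V) (u : U) : V :=
  eq_rect U (fun T0 : lmodType R => (T0 : Type)) u V p.

Lemma tcast_id (U : lmodType R) (p : U = U) u : tcast p u = u.
Proof. by rewrite (Prop_irrelevance p erefl). Qed.

Lemma tcastD (U V : lmodType R) (p : U = V) u v : tcast p (u + v) = tcast p u + tcast p v.
Proof. by case: V / p. Qed.
Lemma tcastZ (U V : lmodType R) (p : U = V) a u : tcast p (a *: u) = a *: tcast p u.
Proof. by case: V / p. Qed.
Lemma tcast0 (U V : lmodType R) (p : U = V) : tcast p 0 = 0.
Proof. by case: V / p. Qed.

Lemma tcast_tens (U V : lmodType R) (p : U = V) (q : tF T U = tF T V) m u :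
  tcast q (tens T m u) = tens T m (tcast p u).
Proof. by case: V / p q => q; rewrite !tcast_id. Qed.

Lemma tcast_sum (U V : lmodType R) (p : U = V) (I : Type) (r : seq I) (P : pred I) (F : I -> U) :
  tcast p (\sum_(i <- r | P i) F i) = \sum_(i <- r | P i) tcast p (F i).
Proof. by case: V / p. Qed.


Lemma tFmap3 (U1 U2 U3 U4 V : lmodType R) (g3 : {linear U1 -> U2}) (g2 : {linear U2 -> U3})
  (g1 : {linear U3 -> U4}) (h : {linear U1 -> V}) (p : V = U4) (q : tF T V = tF T U4) :
  (forall x, g1 (g2 (g3 x)) = tcast p (h x)) ->
  forall z, tFmap T g1 (tFmap T g2 (tFmap T g3 z)) = tcast q (tFmap T h z).
Proof.
move=> E; apply: tF_uniq; try by move=> x y; rewrite ?raddfD ?tcastD.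
by move=> m x; rewrite !tFmapE E (tcast_tens p).
Qed.

Lemma tFmap3_0 (U1 U2 U3 U4 : lmodType R) (g3 : {linear U1 -> U2}) (g2 : {linear U2 -> U3})
  (g1 : {linear U3 -> U4}) :
  (forall x, g1 (g2 (g3 x)) = 0) ->
  forall z, tFmap T g1 (tFmap T g2 (tFmap T g3 z)) = 0.
Proof.
move=> E; apply: (@tF_uniq _ _ _ (fun _ => 0)); try by move=> x y; rewrite ?raddfD ?addr0.
by move=> m x; rewrite !tFmapE E tens0.
Qed.

Lemma tFmap2_id (U1 U2 : lmodType R) (f : {linear U1 -> U2}) (g : {linear U2 -> U1}) :
  (forall x, g (f x) = x) -> forall z, tFmap T g (tFmap T f z) = z.
Proof.
move=> E; apply: (@tF_uniq _ _ _ id); try by move=> x y; rewrite ?raddfD.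
by move=> m x; rewrite !tFmapE E.
Qed.

Lemma tFmap2_0 (U1 U2 U3 : lmodType R) (f : {linear U1 -> U2}) (g : {linear U2 -> U3}) :
  (forall x, g (f x) = 0) -> forall z, tFmap T g (tFmap T f z) = 0.
Proof.
move=> E; apply: (@tF_uniq _ _ _ (fun _ => 0)); try by move=> x y; rewrite ?raddfD ?addr0.
by move=> m x; rewrite !tFmapE E tens0.
Qed.

Lemma Fmapn_ext n (U V : lmodType R) (f g : {linear U -> V}) :
  f =1 g -> forall z, Fmapn T n f z = Fmapn T n g z.
Proof.
move=> fg; elim: n => [|n IH] z //=; exact: tFmap_ext.
Qed.

Lemma Fmapn_zero n (U V : lmodType R) (f : {linear U -> V}) :
  (forall x, f x = 0) -> forall z, Fmapn T n f z = 0.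
Proof.
move=> f0; elim: n => [|n IH] z //=; exact: tFmap_zero.
Qed.

Lemma FcastE (a b c : nat) (Y : lmodType R) (e : (a + b)%N = c) p x :
  Fcast e x = @tcast (Fpow T a (Fpow T b Y)) (Fpow T c Y) p x.
Proof. exact: (congr1 (fun q => tcast q x) (Prop_irrelevance _ _)). Qed.

End TF.

Section Ind.
Variables (R : pzRingType) (M : lmodType R) (B : bimodule_on M).
Variable T : tensor_functor B.
Variable N : nat.

Definition injn (X : lmodType R) (n : nat) (w : Fpow T n X) : dsum T N X :=
  fun k => match n =P nat_of_ord k with
           | ReflectT e => eq_rect n (fun m => Fpow T m X) w _ e
           | ReflectF _ => 0 end.

Lemma injn_eq X n (w : Fpow T n X) (k : 'I_N.+1) (e : n = k) :
  injn w k = eq_rect n (fun m => Fpow T m X) w k e.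
Proof. by rewrite /injn; case: eqP => // e'; rewrite (eq_irrelevance e e'). Qed.

Lemma injn_val X (k : 'I_N.+1) (w : Fpow T k X) : injn w k = w.
Proof. exact: (injn_eq w (erefl (nat_of_ord k))). Qed.

Lemma injn_neq X n (w : Fpow T n X) (k : 'I_N.+1) : n != k -> injn w k = 0.
Proof. by rewrite /injn; case: eqP. Qed.

Lemma injn_big X n (w : Fpow T n X) : (N < n)%N -> injn w = 0.
Proof.
move=> hn; apply: functional_extensionality_dep => k; apply: injn_neq.
by apply/eqP => e; move: (ltn_ord k); rewrite -e ltnS leqNgt hn.
Qed.

Lemma injn_linear X n : linear (@injn X n).
Proof.
move=> a u v; apply: functional_extensionality_dep => k.
rewrite -[RHS]/(a *: injn u k + injn v k).
case: (eqVneq n k) => [e|ne]; last by rewrite !injn_neq // scaler0 addr0.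
rewrite !(injn_eq _ e).
by move: (nat_of_ord k) e => m e; case: m / e.
Qed.
HB.instance Definition _ X n := GRing.isLinear.Build R (Fpow T n X) (dsum T N X) _
  (@injn X n) (@injn_linear X n).

Definition atn (X : lmodType R) (n : nat) (u : dsum T N X) : Fpow T n X :=
  match (n < N.+1)%N =P true with ReflectT h => u (Ordinal h) | ReflectF _ => 0 end.

Lemma atn_ord X (k : 'I_N.+1) (u : dsum T N X) : atn k u = u k.
Proof.
case: k => k hk; rewrite /atn /=; case: eqP => [h|]; last by rewrite hk.
by rewrite (bool_irrelevance h hk).
Qed.

Lemma atn_linear X n : linear (@atn X n).
Proof. by move=> a u v; rewrite /atn; case: eqP => // _; rewrite scaler0 addr0. Qed.
HB.instance Definition _ X n := GRing.isLinear.Build R (dsum T N X) (Fpow T n X) _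
  (@atn X n) (@atn_linear X n).

Lemma atn_cast W n (k : 'I_N.+1) (p : Fpow T n W = Fpow T k W) u :
  n = k -> tcast p (atn n u) = u k.
Proof. by move=> e; move: p; rewrite e => p; rewrite tcast_id atn_ord. Qed.

Definition fcompf (X W : lmodType R) (f : {linear dsum T N X -> dsum T N W}) (n : nat)
  (y : X) : Fpow T n W := atn n (f (injn (n := 0) y)).
Lemma fcompf_linear X W f n : linear (@fcompf X W f n).
Proof. by move=> a u v; rewrite /fcompf !raddfD /= !linearZ. Qed.
HB.instance Definition _ X W f n := GRing.isLinear.Build R X (Fpow T n W) _
  (@fcompf X W f n) (@fcompf_linear X W f n).

Lemma fcompfE (X W : lmodType R) (f : {linear dsum T N X -> dsum T N W}) n y :
  (fcompf f n : {linear X -> Fpow T n W}) y = atn n (f (injn (n := 0) y)).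
Proof. by []. Qed.

Lemma cInd0 X (z : tF T (dsum T N X)) (k : 'I_N.+1) : nat_of_ord k = 0%N -> cInd z k = 0.
Proof. by case: k => [[|k] hk]. Qed.

Lemma cIndS X (z : tF T (dsum T N X)) k (hk : (k.+1 < N.+1)%N) (h' : (k < N.+1)%N) :
  cInd z (Ordinal hk) = tFmap T (dproj (Ordinal h')) z.
Proof. rewrite /cInd /=. by rewrite (bool_irrelevance (ltnW _) h'). Qed.

Lemma injn_cInd X n (w : Fpow T n.+1 X) : (n < N)%N ->
  injn w = cInd (tFmap T (@injn X n) w).
Proof.
move=> hn; apply: functional_extensionality_dep => -[[|k] hk].
  by rewrite injn_neq.
rewrite (cIndS _ _ (ltnW hk)); case: (eqVneq n k) => [e|ne].
  subst k; rewrite (injn_eq w (k := Ordinal hk) (erefl _)) /=; symmetry; apply: tFmap2_id => x.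
  rewrite /= /dproj; exact: (injn_val (k := Ordinal (ltnW hk))).

rewrite injn_neq ?eqSS //; symmetry; apply: tFmap2_0 => x.
by rewrite /= /dproj injn_neq.
Qed.


Lemma fs X W (f : {linear dsum T N X -> dsum T N W}) (fI : IndMor f) :
 forall i (w : Fpow T i X) (k : 'I_N.+1),
   (forall (hik : (i <= k)%N) (p : Fpow T i (Fpow T (k - i) W) = Fpow T k W),
       f (injn w) k = tcast p (Fmapn T i (fcompf f (k - i)) w)) /\
   ((k < i)%N -> f (injn w) k = 0).
Proof.
elim=> [|i IH] w k.
  split=> // hik p; rewrite /= /fcompf.
  by rewrite atn_cast // subn0.
have [hi|hi] := leqP N i.
  rewrite injn_big ?ltnS // raddf0; split=> // hik.
  by move: (ltn_ord k); rewrite ltnS => /(leq_trans hik); rewrite ltnNge hi.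
rewrite (injn_cInd w hi) fI; case: k => [[|k] hk].
  by split=> // _ _; rewrite cInd0.
rewrite (cIndS _ _ (ltnW hk)); split.
  move=> hik p; rewrite ltnS in hik.
  have p' : Fpow T i (Fpow T (k - i) W) = Fpow T k W.
    exact: (etrans (FpowD T i (k - i) W) (f_equal (fun n => Fpow T n W) (subnKC hik))).
  apply: (tFmap3 (p := p')) => x.
  exact: ((IH x (Ordinal (ltnW hk))).1 hik p').
move=> hki; rewrite ltnS in hki; apply: tFmap3_0 => x.
exact: ((IH x (Ordinal (ltnW hk))).2 hki).
Qed.


Lemma FcastP (a b c : nat) (Y : lmodType R) (e : (a + b)%N = c) (r : R) x y :
  Fcast (T := T) (Y := Y) e (r *: x + y) = r *: Fcast e x + Fcast e y.
Proof. by rewrite /Fcast; case: _ / (etrans _ _). Qed.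

Lemma Fcast0 (a b c : nat) (Y : lmodType R) (e : (a + b)%N = c) :
  Fcast e (0 : Fpow T a (Fpow T b Y)) = 0.
Proof. by rewrite /Fcast; case: _ / (etrans _ _). Qed.

Lemma starmap_linear (X Y : lmodType R) (g : forall k : 'I_N.+1, {linear X -> Fpow T k Y}) :
  linear (starmap g).
Proof.
move=> a u v; apply: functional_extensionality_dep => j.
rewrite -[RHS]/(a *: starmap g u j + starmap g v j) /starmap scaler_sumr -big_split.
apply: eq_bigr => i _.
rewrite -[(a *: u + v) (wid i)]/(a *: u (wid i) + v (wid i)).
by rewrite linearP FcastP.
Qed.
HB.instance Definition _ (X Y : lmodType R) g := GRing.isLinear.Build R (dsum T N X) (dsum T N Y) _
  (@starmap R M B T N X Y g) (@starmap_linear X Y g).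

Lemma cIndD X (x y : tF T (dsum T N X)) : cInd (x + y) = cInd x + cInd y.
Proof.
apply: functional_extensionality_dep => -[[|k] hk].
  by rewrite -[RHS]/(cInd x _ + cInd y _) !cInd0 ?addr0.
by rewrite -[RHS]/(cInd x _ + cInd y _) !(cIndS _ _ (ltnW hk)) raddfD.
Qed.

Lemma cInd_lift X (j : nat) (hj : (j.+1 < N.+1)%N) (z : tF T (dsum T N X)) (i : 'I_j.+1) :
  cInd z (wid (j := Ordinal hj) (lift ord0 i)) = tFmap T (dproj (wid (j := Ordinal (ltnW hj)) i)) z.
Proof.
rewrite /cInd /wid /widen_ord /=. set p1 := ltnW _. set p2 := widen_ord_proof _ _. by rewrite (bool_irrelevance p1 p2).
Qed.


Lemma Fcast_tensS (Y Z : lmodType R) (g : forall k : 'I_N.+1, {linear Y -> Fpow T k Z})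
  n c (o1 o2 : 'I_N.+1) (e1 : (n.+1 + o1)%N = c.+1) (e2 : (n + o2)%N = c) m
  (x : Fpow T n Y) : o1 = o2 ->
  Fcast e1 (tFmap T (Fmapn T n (g o1)) (tens T m x)) =
  tens T m (Fcast e2 (Fmapn T n (g o2) x)).
Proof.
move=> eo; subst o2; rewrite tFmapE.
pose P := etrans (FpowD T n o1 Z) (f_equal (fun k => Fpow T k Z) e2).
by rewrite (FcastE e1 (f_equal (tF T) P)) (FcastE e2 P) (tcast_tens P).
Qed.

Lemma starmapE (X Y : lmodType R) (g : forall k : 'I_N.+1, {linear X -> Fpow T k Y}) u j :
  starmap g u j = \sum_(i < j.+1) Fcast (wid_sbo i) (Fmapn T (wid i) (g (sbo i)) (u (wid i))).
Proof. by []. Qed.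

Lemma starI (X Y : lmodType R) (g : forall k : 'I_N.+1, {linear X -> Fpow T k Y}) :
  IndMor (starmap g).
Proof.
move=> z; apply: functional_extensionality_dep => -[[|j] hj].
  rewrite [RHS]cInd0 // /= starmapE big_ord_recl big_ord0 addr0 cInd0 //.
  by rewrite raddf0 Fcast0.
rewrite [RHS](cIndS _ _ (ltnW hj)); move: z.
apply: (@tF_uniq _ _ _ _ _ _ (fun z => starmap g (cInd z) (Ordinal hj))
   (fun z => tFmap T (dproj (Ordinal (ltnW hj))) (tFmap T (starmap g) z))).
- by move=> x y; rewrite cIndD raddfD.
- by move=> x y; rewrite !raddfD.
move=> m u /=; rewrite !tFmapE /= /dproj.
rewrite !starmapE tens_sum big_ord_recl cInd0 // raddf0 Fcast0 add0r.
apply: eq_bigr => i _; rewrite cInd_lift.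
rewrite tFmapE. move: i => /= i. pose L : 'I_(nat_of_ord (Ordinal hj)).+1 := lift ord0 i. pose o : 'I_N.+1 := @Ordinal N.+1 j (ltnW hj). have H := (@Fcast_tensS _ _ g (@wid N o i) j (sbo (j := Ordinal hj) L) (@sbo N o i) (wid_sbo L) (@wid_sbo N o i) m (dproj (@wid N o i) u) (@ord_inj N.+1 (sbo L) (@sbo N o i) erefl)). exact H.
Qed.


Lemma compI (X Y Z : lmodType R) (f : {linear dsum T N X -> dsum T N Y})
  (g : {linear dsum T N Y -> dsum T N Z}) : IndMor f -> IndMor g -> IndMor (g \o f).
Proof.
move=> fI gI z /=; rewrite fI gI; congr (cInd _).
exact: tFmap_comp.
Qed.

Lemma cast_fam (Y Z : lmodType R) (g : forall k : 'I_N.+1, {linear Y -> Fpow T k Z})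
  (o1 o2 : 'I_N.+1) (p : Fpow T o1 Z = Fpow T o2 Z) y : o1 = o2 -> tcast p (g o1 y) = g o2 y.
Proof. by move=> e; subst o2; rewrite tcast_id. Qed.

Lemma star_inj0 (Y Z : lmodType R) (g : forall k : 'I_N.+1, {linear Y -> Fpow T k Z}) y k :
  starmap g (injn (n := 0) y) k = g k y.
Proof.
rewrite starmapE big_ord_recl big1 ?addr0.
  rewrite (injn_eq y (k := wid ord0) erefl) /=.
  rewrite (FcastE _ (etrans (FpowD T 0 (sbo (@ord0 k)) Z) (f_equal (fun n => Fpow T n Z) (wid_sbo ord0)))).
  by apply: cast_fam; apply: val_inj; rewrite /= subn0.
by move=> i _; rewrite injn_neq // raddf0 Fcast0.
Qed.

Lemma star_col (Y Z : lmodType R) (g : forall k : 'I_N.+1, {linear Y -> Fpow T k Z}) y :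
  starmap g (injn (n := 0) y) = (fun k => g k y).
Proof. by apply: functional_extensionality_dep => k; rewrite star_inj0. Qed.

Lemma dsum_decomp (X : lmodType R) (u : dsum T N X) : u = \sum_(i < N.+1) injn (u i).
Proof.
apply: functional_extensionality_dep => k.
rewrite -[RHS]/(dproj k (\sum_(i < N.+1) injn (u i))) raddf_sum (bigD1 k) //= /dproj injn_val.
rewrite big1 ?addr0 // => i ne; rewrite injn_neq //.
Qed.

Lemma star_form (X W : lmodType R) (f : {linear dsum T N X -> dsum T N W}) :
  IndMor f -> forall u, f u = starmap (fun k : 'I_N.+1 => fcompf f k) u.
Proof.
move=> fI u; apply: functional_extensionality_dep => j.
rewrite {1}(dsum_decomp u) raddf_sum.
rewrite -[LHS]/(dproj j (\sum_(i < N.+1) f (injn (u i)))) raddf_sum /dproj.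
rewrite (bigID (fun i : 'I_N.+1 => (i < j.+1)%N)) /= [X in _ + X]big1 ?addr0; last first.
  move=> i hi; apply: (fs fI _ _).2.
  by rewrite ltnNge -ltnS.
rewrite (big_ord_narrow (ltn_ord j)) starmapE.
apply: eq_bigr => i _.
exact ((fs fI (u (wid i)) j).1 (ltn_ord i) _).
Qed.

Lemma starmap_ext (X Y : lmodType R) (g g' : forall k : 'I_N.+1, {linear X -> Fpow T k Y}) u :
  (forall k y, g k y = g' k y) -> starmap g u = starmap g' u.
Proof.
move=> E; apply: functional_extensionality_dep => j; rewrite !starmapE.
by apply: eq_bigr => i _; rewrite (Fmapn_ext (E (sbo i))).
Qed.

Lemma starmap_zero (X Y : lmodType R) (g : forall k : 'I_N.+1, {linear X -> Fpow T k Y}) u :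
  (forall k y, g k y = 0) -> starmap g u = 0.
Proof.
move=> E; apply: functional_extensionality_dep => j; rewrite !starmapE.
by rewrite big1 // => i _; rewrite Fmapn_zero // Fcast0.
Qed.

End Ind.

Unset Implicit Arguments. Set Strict Implicit. Set Printing Implicit Defensive.

Theorem lemma2p2 (R : pzRingType) (M : lmodType R) (B : bimodule_on M)
    (T : tensor_functor B) (N : nat) (nilM : nilpotent_bimod T N)
    (X Y Z : lmodType R)
    (a : forall k : 'I_N.+1, {linear X -> Fpow T k Y})
    (b : forall k : 'I_N.+1, {linear Y -> Fpow T k Z})
    (exact_ab : forall y : dsum T N Y,
        starmap b y = 0 <-> exists x : dsum T N X, y = starmap a x)
    (W : lmodType R) :
  (forall f : {linear dsum T N Y -> dsum T N W}, IndMor f ->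
     ((forall x : dsum T N X, f (starmap a x) = 0) <->
      exists2 g : {linear dsum T N Z -> dsum T N W}, IndMor g &
        forall y : dsum T N Y, f y = g (starmap b y)))
  <->
  (forall f : forall k : 'I_N.+1, {linear Y -> Fpow T k W},
     (forall (j : 'I_N.+1) (x : X), conv f a j x = 0) ->
     exists g : forall k : 'I_N.+1, {linear Z -> Fpow T k W},
       forall (j : 'I_N.+1) (y : Y), f j y = conv g b j y).
Proof.
split.
- move=> H f_ Hc.
  have FfI := starI f_.
  have Hz : forall x, starmap f_ (starmap a x) = 0.
    move=> x.
    have hI := compI (starI a) FfI.
    have -> : starmap f_ (starmap a x) = (starmap f_ \o starmap a) x by [].
    rewrite (star_form hI); apply: starmap_zero => k y.
    rewrite fcompfE /= star_col atn_ord.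
    exact: Hc.
  have [g gI Hg] := (H _ FfI).1 Hz.
  exists (fun k : 'I_N.+1 => fcompf g k) => j y.
  rewrite -(star_inj0 f_ y j) Hg star_col (star_form gI).
  by [].
- move=> C3 f fI; split.
  + move=> Hz.
    have [g_ Hg] : exists g : forall k : 'I_N.+1, {linear Z -> Fpow T k W},
       forall (j : 'I_N.+1) (y : Y), (fcompf f j : {linear Y -> Fpow T j W}) y = conv g b j y.
      apply: C3 => j x.
      change (starmap (fun k : 'I_N.+1 => fcompf f k) (fun k => a k x) j = 0).
      by rewrite -(star_form fI) -star_col Hz.
    exists (starmap g_); first exact: starI.
    move=> y.
    have hI := compI (starI b) (starI g_).
    transitivity ((starmap g_ \o starmap b) y); last by [].
    rewrite (star_form fI) (star_form hI); apply: starmap_ext => k z.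
    by rewrite Hg fcompfE /= star_col atn_ord.
  + move=> [g gI Hg] x.
    rewrite Hg.
    by rewrite ((exact_ab (starmap a x)).2 (ex_intro _ x erefl)) raddf0.
Qed.
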